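(* Let $F$ be a field and $n\ge 2$ an integer. Then the matrix ring $\mathbb{M}_n(F)$ does not have the $2$-nil-sum property.
   Context: All rings are associative with identity. A central unit of $R$ is a unit of $R$ lying in the center of $R$; a non central-unit is an element that is not a central unit. A ring $R$ has the $2$-nil-sum property if every non central-unit of $R$ is a sum of two nilpotent elements of $R$. *)

(* Defs.v *)
From mathcomp Require Import all_boot all_order all_algebra.
Set Implicit Arguments. Unset Strict Implicit. Unset Printing Implicit Defensive.
Import GRing.Theory.
Local Open Scope ring_scope.

Definition nilpotent_elt (R : pzRingType) (x : R) : Prop := exists k : nat, x ^+ k = 0.

Definition central_unit (R : unitRingType) (x : R) : Prop :=
  x \is a GRing.unit /\ forall y : R, x * y = y * x.

Definition two_nil_sum {R : unitRingType} : Prop :=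
  forall x : R, ~ central_unit x ->
    exists a b : R, nilpotent_elt a /\ nilpotent_elt b /\ x = a + b.

(* Main.v *)
Require Import Defs.
From mathcomp Require Import all_boot all_order all_algebra.
Set Implicit Arguments. Unset Strict Implicit. Unset Printing Implicit Defensive.
Import GRing.Theory.
Local Open Scope ring_scope.

Lemma nil_tr0 (F : fieldType) (m k : nat) (A : 'M[F]_m.+1) :
  A ^+ k = 0 -> \tr A = 0.
Proof.
move=> Ak.
set Ap := map_mx (@polyC F) A.
have cxy : GRing.comm ('X%:M : 'M[{poly F}]_m.+1) Ap.
  by rewrite /GRing.comm -!mulmxE; symmetry; apply: scalar_mxC.
have e := subrXX_comm k cxy.
have ApK : Ap ^+ k = 0 by rewrite /Ap -rmorphXn Ak raddf0.
have sX : ('X%:M : 'M[{poly F}]_m.+1) ^+ k = ('X ^+ k)%:M.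
  by rewrite (rmorphXn (@scalar_mx {poly F} m.+1)).
rewrite ApK subr0 sX in e.
have := congr1 determinant e.
rewrite det_scalar detM -/(char_poly_mx A) -/(char_poly A) => e2.
have dv : char_poly A %| ('X - 0%:P) ^+ (k * m.+1).
  by rewrite polyC0 subr0 exprM e2 dvdp_mulIl.
have [j _ ej] := dvdp_exp_XsubCP dv.
rewrite polyC0 subr0 in ej.
rewrite eqp_monic ?char_poly_monic ?monicXn // in ej.
move/eqP: ej => ej.
have sj := size_char_poly A.
rewrite ej size_polyXn in sj; case: sj => sj.
have := char_poly_trace A (ltn0Sn m).
rewrite ej coefXn sj /=.
rewrite ltn_eqF // => /eqP; rewrite eq_sym oppr_eq0 => /eqP.
done.
Qed.

Theorem mainTheorem6 (F : fieldType) (n : nat) (hn : (2 <= n)%N) :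
  ~ two_nil_sum (R := 'M[F]_n.-1.+1).
Proof.
case: n hn => [|[|n']] // _ H.
set x : 'M[F]_n'.+2 := delta_mx ord0 ord0.
have ncu : ~ central_unit x.
  case=> _ /(_ (delta_mx ord0 ord_max)).
  rewrite -!mulmxE mul_delta_mx mul_delta_mx_0 // => /matrixP /(_ ord0 ord_max).
  by rewrite !mxE !eqxx /= => /eqP; rewrite oner_eq0.
have [a [b [[ka Ha] [[kb Hb] exy]]]] := H x ncu.
have := congr1 mxtrace exy.
rewrite mxtraceD (nil_tr0 Ha) (nil_tr0 Hb) addr0.
rewrite /mxtrace (bigD1 ord0) //= big1 ?addr0; last first.
  by move=> i /negPf ni; rewrite mxE ni.
by rewrite mxE eqxx => /eqP; rewrite oner_eq0.
Qed.
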